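(* Let $X,\hat X$ be real matrices of the same size with singular value decompositions $X=U\Sigma V^T$ and $\hat X=\hat U\hat\Sigma\hat V^T$ (with $U,V,\hat U,\hat V$ having orthonormal columns and $\Sigma,\hat\Sigma$ square nonnegative diagonal). Assume $\|X\|<1$, $\|\hat X\|<1$ and $\|X\|^2+2\|\hat X-X\|<1$. Then $$\big\|U\Sigma(I-\Sigma^2)^{-1}V^T-\hat U\hat\Sigma(I-\hat\Sigma^2)^{-1}\hat V^T\big\|\le\frac{3\|X-\hat X\|}{(1-\|X\|^2-2\|\hat X-X\|)^2}.$$
   Context: $\|\cdot\|$ denotes the spectral norm. *)

(* Defs.v *)
From HB Require Import structures.
From mathcomp Require Import all_boot all_order all_algebra.
From mathcomp Require Import boolp classical_sets reals.
Set Implicit Arguments. Unset Strict Implicit. Unset Printing Implicit Defensive.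
Import Order.TTheory GRing.Theory Num.Theory.
Local Open Scope ring_scope.
Local Open Scope classical_set_scope.

Definition vnorm (R : realType) (n : nat) (x : 'cV[R]_n) : R :=
  Num.sqrt (\sum_(i < n) x i 0 ^+ 2).

Definition specnorm (R : realType) (m n : nat) (A : 'M[R]_(m, n)) : R :=
  sup [set vnorm (A *m x) | x in [set x : 'cV[R]_n | vnorm x <= 1]].

Definition is_svd (R : realType) (m n r : nat) (X : 'M[R]_(m, n))
  (U : 'M[R]_(m, r)) (S : 'M[R]_r) (V : 'M[R]_(n, r)) : Prop :=
  [/\ U^T *m U = 1%:M, V^T *m V = 1%:M, is_diag_mx S,
      (forall i, 0 <= S i i) & X = U *m S *m V^T].

(* Main.v *)
Require Import Defs.
From HB Require Import structures.
From mathcomp Require Import all_boot all_order all_algebra.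
From mathcomp Require Import boolp classical_sets reals.
From mathcomp Require Import ring lra.
Import Order.TTheory GRing.Theory Num.Theory.
Set Implicit Arguments. Unset Strict Implicit.
Local Open Scope ring_scope.

Definition dot (R : realType) (n : nat) (x y : 'cV[R]_n) : R := (x^T *m y) 0 0.

Lemma dotE (R : realType) (n : nat) (x y : 'cV[R]_n) :
  dot x y = \sum_(i < n) x i 0 * y i 0.
Proof. by rewrite /dot mxE; apply: eq_bigr => i _; rewrite mxE. Qed.

Lemma dotC (R : realType) (n : nat) (x y : 'cV[R]_n) : dot x y = dot y x.
Proof. by rewrite !dotE; apply: eq_bigr => i _; rewrite mulrC. Qed.

Lemma dotDl (R : realType) (n : nat) (x y z : 'cV[R]_n) :
  dot (x + y) z = dot x z + dot y z.
Proof. by rewrite !dotE -big_split; apply: eq_bigr => i _; rewrite mxE mulrDl. Qed.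

Lemma dotBl (R : realType) (n : nat) (x y z : 'cV[R]_n) :
  dot (x - y) z = dot x z - dot y z.
Proof. by rewrite !dotE -sumrB; apply: eq_bigr => i _; rewrite !mxE mulrBl. Qed.

Lemma dotZl (R : realType) (n : nat) (a : R) (x z : 'cV[R]_n) :
  dot (a *: x) z = a * dot x z.
Proof. by rewrite !dotE mulr_sumr; apply: eq_bigr => i _; rewrite mxE mulrA. Qed.

Lemma dotDr (R : realType) (n : nat) (x y z : 'cV[R]_n) :
  dot z (x + y) = dot z x + dot z y.
Proof. by rewrite dotC dotDl !(dotC z). Qed.

Lemma dotBr (R : realType) (n : nat) (x y z : 'cV[R]_n) :
  dot z (x - y) = dot z x - dot z y.
Proof. by rewrite dotC dotBl !(dotC z). Qed.

Lemma dotZr (R : realType) (n : nat) (a : R) (x z : 'cV[R]_n) :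
  dot z (a *: x) = a * dot z x.
Proof. by rewrite dotC dotZl dotC. Qed.

Lemma dot_mull (R : realType) (m n : nat) (A : 'M[R]_(m, n)) x y :
  dot (A *m x) y = dot x (A^T *m y).
Proof. by rewrite /dot trmx_mul mulmxA. Qed.

Lemma dot_ge0 (R : realType) (n : nat) (x : 'cV[R]_n) : 0 <= dot x x.
Proof. by rewrite dotE; apply: sumr_ge0 => i _; rewrite -expr2 sqr_ge0. Qed.

Lemma dot_eq0 (R : realType) (n : nat) (x : 'cV[R]_n) : dot x x = 0 -> x = 0.
Proof.
rewrite dotE => H; apply/matrixP => i j; rewrite (ord1 j) mxE.
have := @psumr_eq0P _ _ predT (fun i : 'I_n => x i 0 * x i 0).
move=> /(_ (fun k _ => sqr_ge0 _)) => /(_ H i isT)/eqP.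
by rewrite mulf_eq0 orbb => /eqP.
Qed.

Lemma vnormE (R : realType) (n : nat) (x : 'cV[R]_n) : vnorm x = Num.sqrt (dot x x).
Proof. by rewrite /vnorm dotE; congr Num.sqrt; apply: eq_bigr => i _; rewrite expr2. Qed.

Lemma vnorm_ge0 (R : realType) (n : nat) (x : 'cV[R]_n) : 0 <= vnorm x.
Proof. by rewrite vnormE sqrtr_ge0. Qed.

Lemma vnorm_sq (R : realType) (n : nat) (x : 'cV[R]_n) : vnorm x ^+ 2 = dot x x.
Proof. by rewrite vnormE sqr_sqrtr // dot_ge0. Qed.

Lemma vnorm_eq0 (R : realType) (n : nat) (x : 'cV[R]_n) : vnorm x = 0 -> x = 0.
Proof. by move=> H; apply: dot_eq0; rewrite -vnorm_sq H expr0n. Qed.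

Lemma vnorm0 (R : realType) (n : nat) : vnorm (0 : 'cV[R]_n) = 0.
Proof. by rewrite vnormE dotE big1 ?sqrtr0 // => i _; rewrite mxE mul0r. Qed.

Lemma le_vnorm (R : realType) (n k : nat) (x : 'cV[R]_n) (y : 'cV[R]_k) :
  dot x x <= dot y y -> vnorm x <= vnorm y.
Proof. by move=> H; rewrite !vnormE ler_sqrt // dot_ge0. Qed.

Lemma le_vnorm_c (R : realType) (n : nat) (x : 'cV[R]_n) (c : R) :
  0 <= c -> dot x x <= c ^+ 2 -> vnorm x <= c.
Proof. by move=> c0 H; rewrite vnormE -(ger0_norm c0) -sqrtr_sqr ler_sqrt // sqr_ge0. Qed.

Lemma CS (R : realType) (n : nat) (x y : 'cV[R]_n) : dot x y <= vnorm x * vnorm y.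
Proof.
have [a0|] := eqVneq (vnorm x) 0.
  by rewrite (vnorm_eq0 a0) dotE big1 ?vnorm0 ?mul0r // => i _; rewrite mxE mul0r.
have [b0|] := eqVneq (vnorm y) 0.
  by rewrite (vnorm_eq0 b0) dotE big1 ?vnorm0 ?mulr0 // => i _; rewrite mxE mulr0.
move=> nb na.
have ha : 0 < vnorm x by rewrite lt0r na vnorm_ge0.
have hb : 0 < vnorm y by rewrite lt0r nb vnorm_ge0.
have := dot_ge0 (vnorm y *: x - vnorm x *: y).
rewrite !(dotBl, dotBr, dotZl, dotZr) -!vnorm_sq (dotC y x).
set a := vnorm x; set b := vnorm y; set d := dot x y => H.
have hab : 0 < a * b by rewrite mulr_gt0.
nra.
Qed.

Lemma vnormD (R : realType) (n : nat) (x y : 'cV[R]_n) :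
  vnorm (x + y) <= vnorm x + vnorm y.
Proof.
apply: le_vnorm_c; first by rewrite addr_ge0 ?vnorm_ge0.
rewrite !(dotDl, dotDr) (dotC y x) -!vnorm_sq.
have := CS x y; nra.
Qed.

Lemma vnormZ (R : realType) (n : nat) (a : R) (x : 'cV[R]_n) :
  vnorm (a *: x) = `|a| * vnorm x.
Proof.
by rewrite !vnormE dotZl dotZr mulrA -expr2 sqrtrM ?sqr_ge0 // sqrtr_sqr.
Qed.

Lemma vnormN (R : realType) (n : nat) (x : 'cV[R]_n) : vnorm (- x) = vnorm x.
Proof. by rewrite -scaleN1r vnormZ normrN normr1 mul1r. Qed.

Lemma vnorm_sum (R : realType) (n k : nat) (F : 'I_k -> 'cV[R]_n) :
  vnorm (\sum_(j < k) F j) <= \sum_(j < k) vnorm (F j).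
Proof.
apply: (big_ind2 (fun a b => vnorm a <= b)); first by rewrite vnorm0.
  by move=> a b c d h1 h2; apply: le_trans (vnormD a c) _; apply: lerD.
by [].
Qed.

Lemma coord_le (R : realType) (n : nat) (x : 'cV[R]_n) (j : 'I_n) :
  `|x j 0| <= vnorm x.
Proof.
rewrite vnormE -sqrtr_sqr ler_sqrt ?dot_ge0 // dotE (bigD1 j) //= -expr2.
by rewrite lerDl; apply: sumr_ge0 => i _; rewrite -expr2 sqr_ge0.
Qed.

Lemma mulmx_cols (R : realType) (m n : nat) (A : 'M[R]_(m, n)) (x : 'cV[R]_n) :
  A *m x = \sum_(j < n) x j 0 *: col j A.
Proof.
apply/matrixP => i k; rewrite (ord1 k) !mxE summxE.
by apply: eq_bigr => j _; rewrite !mxE mulrC.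
Qed.

Lemma vnorm_mul_bound (R : realType) (m n : nat) (A : 'M[R]_(m, n)) (x : 'cV[R]_n) :
  vnorm (A *m x) <= vnorm x * \sum_(j < n) vnorm (col j A).
Proof.
rewrite mulmx_cols mulr_sumr; apply: le_trans (vnorm_sum _) _.
apply: ler_sum => j _; rewrite vnormZ ler_wpM2r ?vnorm_ge0 //.
exact: coord_le.
Qed.

Definition nset (R : realType) (m n : nat) (A : 'M[R]_(m, n)) :=
  [set vnorm (A *m x) | x in [set x : 'cV[R]_n | vnorm x <= 1]]%classic.

Lemma specnormE (R : realType) (m n : nat) (A : 'M[R]_(m, n)) :
  specnorm A = sup (nset A).
Proof. by []. Qed.

Lemma nset_sup (R : realType) (m n : nat) (A : 'M[R]_(m, n)) : has_sup (nset A).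
Proof.
split; first by exists (vnorm (A *m 0)), 0 => //=; rewrite vnorm0 ler01.
exists (\sum_(j < n) vnorm (col j A)) => _ [x /= hx <-].
apply: le_trans (vnorm_mul_bound A x) _.
rewrite -[X in _ <= X]mul1r ler_wpM2r //.
by apply: sumr_ge0 => j _; apply: vnorm_ge0.
Qed.

Lemma specnorm_ge0 (R : realType) (m n : nat) (A : 'M[R]_(m, n)) : 0 <= specnorm A.
Proof.
rewrite specnormE; apply: (sup_upper_bound (nset_sup A)).
by exists 0 => /=; rewrite ?vnorm0 ?ler01 // mulmx0 vnorm0.
Qed.

Lemma specnormP (R : realType) (m n : nat) (A : 'M[R]_(m, n)) (x : 'cV[R]_n) :
  vnorm (A *m x) <= specnorm A * vnorm x.
Proof.
have [x0|nx] := eqVneq (vnorm x) 0.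
  move: x0 => /vnorm_eq0 ->; rewrite mulmx0 !vnorm0 mulr0 //.
have hx : 0 < vnorm x by rewrite lt0r nx vnorm_ge0.
set y := (vnorm x)^-1 *: x.
have hy : vnorm y = 1 by rewrite /y vnormZ ger0_norm ?invr_ge0 ?vnorm_ge0 // mulVf.
have : vnorm (A *m y) <= specnorm A.
  rewrite specnormE; apply: (sup_upper_bound (nset_sup A)).
  by exists y => //=; rewrite hy.
rewrite /y -scalemxAr vnormZ ger0_norm ?invr_ge0 ?vnorm_ge0 //.
by rewrite mulrC -ler_pdivlMr ?invr_gt0 // invrK.
Qed.

Lemma specnorm_le (R : realType) (m n : nat) (A : 'M[R]_(m, n)) (c : R) :
  0 <= c -> (forall x, vnorm (A *m x) <= c * vnorm x) -> specnorm A <= c.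
Proof.
move=> c0 H; rewrite specnormE; apply: ge_sup.
  by exists (vnorm (A *m 0)), 0 => //=; rewrite vnorm0 ler01.
move=> _ [x /= hx <-]; apply: le_trans (H x) _.
by rewrite -[X in _ <= X]mulr1 ler_wpM2l.
Qed.

Lemma specnormM (R : realType) (m n p : nat) (A : 'M[R]_(m, n)) (B : 'M[R]_(n, p)) :
  specnorm (A *m B) <= specnorm A * specnorm B.
Proof.
apply: specnorm_le; first by rewrite mulr_ge0 ?specnorm_ge0.
move=> x; rewrite -mulmxA; apply: le_trans (specnormP _ _) _.
by rewrite -mulrA ler_wpM2l ?specnorm_ge0 ?specnormP.
Qed.

Lemma specnormD (R : realType) (m n : nat) (A B : 'M[R]_(m, n)) :
  specnorm (A + B) <= specnorm A + specnorm B.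
Proof.
apply: specnorm_le; first by rewrite addr_ge0 ?specnorm_ge0.
move=> x; rewrite mulmxDl; apply: le_trans (vnormD _ _) _.
by rewrite mulrDl lerD ?specnormP.
Qed.

Lemma specnormN (R : realType) (m n : nat) (A : 'M[R]_(m, n)) :
  specnorm (- A) = specnorm A.
Proof.
have H : forall B : 'M[R]_(m, n), specnorm (- B) <= specnorm B.
  move=> B; apply: specnorm_le; first exact: specnorm_ge0.
  by move=> x; rewrite mulNmx vnormN specnormP.
by apply/eqP; rewrite eq_le H /= -{1}(opprK A) H.
Qed.

Lemma specnorm_tr (R : realType) (m n : nat) (A : 'M[R]_(m, n)) :
  specnorm A^T <= specnorm A.
Proof.
apply: specnorm_le; first exact: specnorm_ge0.
move=> y; set z := A^T *m y.
have h1 : vnorm z ^+ 2 <= vnorm y * (specnorm A * vnorm z).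
  rewrite vnorm_sq {1}/z dot_mull trmxK.
  apply: le_trans (CS _ _) _; apply: ler_wpM2l; first exact: vnorm_ge0.
  exact: specnormP.
have := vnorm_ge0 z; have := vnorm_ge0 y; have := specnorm_ge0 A.
have [z0|nz] := eqVneq (vnorm z) 0; first by rewrite z0; nra.
have : 0 < vnorm z by rewrite lt0r nz vnorm_ge0.
nra.
Qed.

Lemma lower_bound (R : realType) (p q : nat) (C : 'M[R]_(p, q)) (y : 'cV[R]_q) :
  (1 - specnorm C ^+ 2) * vnorm y <= vnorm ((1%:M - C^T *m C) *m y).
Proof.
have h1 : dot y ((1%:M - C^T *m C) *m y) = vnorm y ^+ 2 - vnorm (C *m y) ^+ 2.
  by rewrite mulmxBl mul1mx dotBr -mulmxA -dot_mull !vnorm_sq dotC.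
have h2 := CS y ((1%:M - C^T *m C) *m y).
have h3 := specnormP C y.
have h4 := vnorm_ge0 (C *m y).
have h5 := specnorm_ge0 C.
have h6 := vnorm_ge0 ((1%:M - C^T *m C) *m y).
rewrite h1 in h2.
set a := vnorm y in h2 h3 *; set b := vnorm (C *m y) in h2 h3 h4.
set c := specnorm C in h3 h5 *; set d := vnorm _ in h2 h6 *.
have [a0|na] := eqVneq a 0; first by rewrite a0 mulr0.
have ha : 0 < a by rewrite lt0r na vnorm_ge0.
have hb : b ^+ 2 <= (c * a) ^+ 2 by rewrite ler_sqr // ?nnegrE ?mulr_ge0 // ltW.
nra.
Qed.

Lemma unit_of_lb (R : realType) (q : nat) (M : 'M[R]_q) (k : R) :
  0 < k -> M^T = M -> (forall y, k * vnorm y <= vnorm (M *m y)) -> M \in unitmx.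
Proof.
move=> k0 MT H; rewrite -row_free_unit -kermx_eq0; apply/eqP.
apply/row_matrixP => i; rewrite row0.
set u := row i (kermx M).
have hu : u *m M = 0 by rewrite /u -row_mul mulmx_ker row0.
have hy : M *m u^T = 0 by rewrite -{1}MT -trmx_mul hu trmx0.
have := H u^T; rewrite hy vnorm0 => h.
have : vnorm u^T = 0.
  apply/eqP; rewrite eq_le vnorm_ge0 andbT.
  by rewrite -(pmulr_rle0 _ k0).
by move/vnorm_eq0 => /(congr1 trmx); rewrite trmxK trmx0.
Qed.

Lemma inv_bound (R : realType) (q : nat) (M : 'M[R]_q) (k : R) :
  0 < k -> M \in unitmx -> (forall y, k * vnorm y <= vnorm (M *m y)) ->
  specnorm (invmx M) <= k^-1.
Proof.
move=> k0 Mu H; apply: specnorm_le; first by rewrite invr_ge0 ltW.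
move=> z; have := H (invmx M *m z); rewrite mulmxA mulmxV // mul1mx.
by rewrite mulrC -ler_pdivlMr // mulrC.
Qed.

Lemma iso_norm (R : realType) (m r : nat) (U : 'M[R]_(m, r)) (z : 'cV[R]_r) :
  U^T *m U = 1%:M -> vnorm (U *m z) = vnorm z.
Proof. by move=> hU; rewrite !vnormE dot_mull mulmxA hU mul1mx. Qed.

Lemma diag_tr (R : realType) (r : nat) (S : 'M[R]_r) : is_diag_mx S -> S^T = S.
Proof.
move=> /is_diag_mxP hS; apply/matrixP => i j; rewrite mxE.
have [->//|nij] := eqVneq i j.
by rewrite !hS // eq_sym.
Qed.

Lemma svd_facts (R : realType) (m n r : nat) (X : 'M[R]_(m, n))
  (U : 'M[R]_(m, r)) (S : 'M[R]_r) (V : 'M[R]_(n, r)) :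
  is_svd X U S V -> specnorm X < 1 ->
  let A := 1%:M - X^T *m X in
  A \in unitmx /\ U *m S *m invmx (1%:M - S *m S) *m V^T = X *m invmx A.
Proof.
case=> hU hV hd _ hX x1 A.
have ST := diag_tr hd.
have nS : specnorm S <= specnorm X.
  apply: specnorm_le; first exact: specnorm_ge0.
  move=> y; rewrite -(iso_norm _ hU) -(iso_norm y hV) mulmxA.
  have -> : U *m S = X *m V.
    by rewrite hX -!mulmxA hV mulmx1.
  by rewrite -mulmxA specnormP.
have x0 := specnorm_ge0 X; have s0 := specnorm_ge0 S.
have k1 : 0 < 1 - specnorm S ^+ 2 by nra.
have k2 : 0 < 1 - specnorm X ^+ 2 by nra.
have Du : 1%:M - S *m S \in unitmx.
  apply: (unit_of_lb k1); last by rewrite -{2}ST; exact: lower_bound.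
  by rewrite linearB /= trmx1 trmx_mul ST.
have Au : A \in unitmx.
  apply: (unit_of_lb k2); last exact: lower_bound.
  by rewrite /A linearB /= trmx1 trmx_mul trmxK.
split=> //.
apply: (canRL (mulmxK Au)).
have VV : forall p (M : 'M[R]_(p, r)), M *m V^T *m V = M.
  by move=> p M; rewrite -mulmxA hV mulmx1.
have UU : forall p (M : 'M[R]_(p, r)), M *m U^T *m U = M.
  by move=> p M; rewrite -mulmxA hU mulmx1.
rewrite /A {1 2}hX !trmx_mul trmxK ST mulmxBr mulmx1 !mulmxA VV UU.
set D := invmx _.
have -> : U *m S *m D *m V^T - U *m S *m D *m S *m S *m V^T
   = U *m S *m (D *m (1%:M - S *m S)) *m V^T.
  by rewrite !(mulmxBr, mulmxBl) mulmx1 !mulmxA.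
by rewrite mulVmx // mulmx1.
Qed.

Lemma zmod_aux (V : zmodType) (a b c : V) : a - c - (a - b) = b - c.
Proof. by rewrite opprB addrC addrA subrK. Qed.

Unset Implicit Arguments. Set Strict Implicit.

Theorem lemma5 (R : realType) (m n r s : nat) (X Xh : 'M[R]_(m, n))
  (U : 'M[R]_(m, r)) (S : 'M[R]_r) (V : 'M[R]_(n, r))
  (Uh : 'M[R]_(m, s)) (Sh : 'M[R]_s) (Vh : 'M[R]_(n, s)) :
  is_svd X U S V -> is_svd Xh Uh Sh Vh ->
  specnorm X < 1 -> specnorm Xh < 1 ->
  specnorm X ^+ 2 + 2 * specnorm (Xh - X) < 1 ->
  specnorm (U *m S *m invmx (1%:M - S *m S) *m V^T
            - Uh *m Sh *m invmx (1%:M - Sh *m Sh) *m Vh^T)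
  <= 3 * specnorm (X - Xh) / (1 - specnorm X ^+ 2 - 2 * specnorm (Xh - X)) ^+ 2.
Proof.
move=> sv svh x1 xh1 hc.
have [Au ->] := svd_facts sv x1.
have [Ahu ->] := svd_facts svh xh1.
have ed : specnorm (Xh - X) = specnorm (X - Xh) by rewrite -opprB specnormN.
rewrite ed in hc *.
set A := 1%:M - X^T *m X in Au *.
set Ah := 1%:M - Xh^T *m Xh in Ahu *.
set B := invmx A; set Bh := invmx Ah.
set K := X^T *m (X - Xh) + (X - Xh)^T *m Xh.
have eK : Ah - A = K.
  have trB : (X - Xh)^T = X^T - Xh^T by apply/matrixP => i j; rewrite !mxE.
  rewrite /Ah /A /K trB mulmxBr mulmxBl addrA subrK.
  exact: zmod_aux.
have eE : X *m B - Xh *m Bh = (X - Xh) *m B + Xh *m (B *m K *m Bh).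
  have eBK : B *m K *m Bh = B - Bh.
    by rewrite -eK mulmxBr mulmxBl -!mulmxA mulmxV // mulmx1 !mulmxA mulVmx // mul1mx.
  by rewrite eBK mulmxBl mulmxBr addrA subrK.
rewrite eE.
set x := specnorm X in x1 hc *; set xh := specnorm Xh in xh1 *; set d := specnorm (X - Xh) in hc *.
have x0 : 0 <= x := specnorm_ge0 X.
have xh0 : 0 <= xh := specnorm_ge0 Xh.
have d0 : 0 <= d := specnorm_ge0 (X - Xh).
have k1 : 0 < 1 - x ^+ 2 by nra.
have k2 : 0 < 1 - xh ^+ 2 by nra.
have nB : specnorm B <= (1 - x ^+ 2)^-1.
  by apply: inv_bound => //; apply: lower_bound.
have nBh : specnorm Bh <= (1 - xh ^+ 2)^-1.
  by apply: inv_bound => //; apply: lower_bound.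
have nK : specnorm K <= x * d + d * xh.
  apply: le_trans (specnormD _ _) _; apply: lerD.
    apply: le_trans (specnormM _ _) _; apply: ler_wpM2r => //; exact: specnorm_tr.
  apply: le_trans (specnormM _ _) _; apply: ler_wpM2r => //; exact: specnorm_tr.
have hxh : xh <= x + d.
  have e : Xh = X - (X - Xh) by rewrite opprB addrC subrK.
  rewrite /xh /x /d {1}e.
  by apply: le_trans (specnormD _ _) _; rewrite specnormN.
set b := (1 - x ^+ 2)^-1 in nB; set bh := (1 - xh ^+ 2)^-1 in nBh.
have b0 : 0 <= specnorm B := specnorm_ge0 B.
have bh0 : 0 <= specnorm Bh := specnorm_ge0 Bh.
have K0 : 0 <= specnorm K := specnorm_ge0 K.
have nE : specnorm ((X - Xh) *m B + Xh *m (B *m K *m Bh)) <= d * b + xh * (b * (x * d + d * xh) * bh).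
  apply: le_trans (specnormD _ _) _; apply: lerD.
    apply: le_trans (specnormM _ _) _; exact: ler_wpM2l.
  apply: le_trans (specnormM _ _) _; apply: ler_wpM2l => //.
  apply: le_trans (specnormM _ _) _.
  apply: ler_pM => //; first exact: specnorm_ge0.
  apply: le_trans (specnormM _ _) _.
  by apply: ler_pM.
apply: le_trans nE _.
set c := 1 - x ^+ 2 - 2 * d.
have c0 : 0 < c by rewrite /c; lra.
have hcP : c <= 1 - x ^+ 2 by rewrite /c; lra.
have hcPh : c <= 1 - xh ^+ 2 by rewrite /c; nra.
have bc : b <= c^-1 by rewrite /b lef_pV2 ?posrE.
have bhc : bh <= c^-1 by rewrite /bh lef_pV2 ?posrE.
have bp : 0 < b by rewrite invr_gt0.
have bhp : 0 < bh by rewrite invr_gt0.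
have bh1 : 1 <= bh by rewrite /bh invf_ge1 //; nra.
have ci0 : 0 < c^-1 by rewrite invr_gt0.
rewrite -exprVn.
set ci := c^-1 in bc bhc ci0 *.
have t1 : b * bh <= ci ^+ 2 by rewrite expr2; apply: ler_pM => //; exact: ltW.
have t2 : xh * (x + xh) <= 2 by nra.
have t3 : d * b <= d * (b * bh) by apply: ler_wpM2l => //; nra.
have t4 : xh * (b * (x * d + d * xh) * bh) = (xh * (x + xh)) * (d * (b * bh)) by ring.
rewrite t4.
have t5 : 0 <= d * (b * bh) by rewrite mulr_ge0 // mulr_ge0 // ltW.
have t6 : d * (b * bh) <= d * ci ^+ 2 by apply: ler_wpM2l.
nra.
Qed.
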